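(* Let $\mathbf D_1\in\mathcal D$. Every $\mathbf D_2\in\mathcal D$ can be written as $\mathbf D_2=\mathbf D(\mathbf D_1,\mathbf W,\mathbf v,\tau)$ with $\mathbf W\in\mathcal W_{\mathbf D_1}$, $\mathbf v\in\mathcal S^p_+$ and $\tau\ge0$ such that $\tau\|\mathbf v\|_\infty\le\pi$. Moreover, for all $j$, $$\frac2\pi\tau\mathbf v_j\le\|\mathbf d_2^j-\mathbf d_1^j\|_2=2\sin\Big(\frac{\tau\mathbf v_j}{2}\Big)\le\tau\mathbf v_j,\qquad \frac2\pi\tau\le\|\mathbf D_2-\mathbf D_1\|_F\le\tau.$$ Conversely, $\mathbf D_1=\mathbf D(\mathbf D_2,\mathbf W',\mathbf v,\tau)$ for some $\mathbf W'\in\mathcal W_{\mathbf D_2}$, with the same $\mathbf v$ and $\tau$.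
   Context: $\mathcal D$: real $m\times p$ matrices with unit $\ell_2$-norm columns; $\mathbf d^j$ denotes the $j$-th column. $\mathcal S^p_+=\{\mathbf v\in\mathbb R^p_+:\|\mathbf v\|_2=1\}$. For $\mathbf D\in\mathcal D$, $\mathcal W_{\mathbf D}=\{\mathbf W\in\mathbb R^{m\times p}:\mathrm{diag}(\mathbf W^\top\mathbf D)=\mathbf 0,\mathrm{diag}(\mathbf W^\top\mathbf W)=\mathbf 1\}$, and $\mathbf D(\mathbf D,\mathbf W,\mathbf v,t)=\mathbf D\,\mathrm{Diag}[\cos(\mathbf vt)]+\mathbf W\,\mathrm{Diag}[\sin(\mathbf vt)]$ (cos, sin entrywise). *)

(* Defs.v *)
From HB Require Import structures.
From mathcomp Require Import all_boot all_order all_algebra.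
From mathcomp Require Import all_classical all_reals all_analysis.
Set Implicit Arguments. Unset Strict Implicit. Unset Printing Implicit Defensive.
Import Order.TTheory GRing.Theory Num.Theory.
Local Open Scope ring_scope.

Section Defs.
Variable R : realType.

Definition colnorm m p (A : 'M[R]_(m, p)) (j : 'I_p) : R :=
  Num.sqrt (\sum_(i < m) A i j ^+ 2).

Definition frob m p (A : 'M[R]_(m, p)) : R :=
  Num.sqrt (\sum_(i < m) \sum_(j < p) A i j ^+ 2).

Definition inD m p (D : 'M[R]_(m, p)) : Prop := forall j, colnorm D j = 1.

Definition inW m p (D W : 'M[R]_(m, p)) : Prop :=
  forall j : 'I_p, (W^T *m D) j j = 0 /\ (W^T *m W) j j = 1.

Definition vnorm p (v : 'cV[R]_p) : R := Num.sqrt (\sum_(i < p) v i 0 ^+ 2).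

Definition infnorm p (v : 'cV[R]_p) : R := \big[Num.max/0]_(i < p) `|v i 0|.

Definition inSplus p (v : 'cV[R]_p) : Prop :=
  (forall i, 0 <= v i 0) /\ vnorm v = 1.

Definition Dcurve m p (D W : 'M[R]_(m, p)) (v : 'cV[R]_p) (t : R) : 'M[R]_(m, p) :=
  D *m diag_mx (\row_j cos (v j 0 * t)) + W *m diag_mx (\row_j sin (v j 0 * t)).

End Defs.

(* Main.v *)
Require Import Defs.
From HB Require Import structures.
From mathcomp Require Import all_boot all_order all_algebra.
From mathcomp Require Import all_classical all_reals all_analysis.
Import Order.TTheory GRing.Theory Num.Theory.
Import numFieldNormedType.Exports.
Local Open Scope classical_set_scope.
Local Open Scope ring_scope.
From mathcomp Require Import ring lra.
Set Implicit Arguments. Unset Strict Implicit. Unset Printing Implicit Defensive.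
Section S.
Variable R : realType.
Lemma sin_le_id (x : R) : 0 <= x -> sin x <= x.
Proof.
move=> x0.
pose g : R -> R := fun y : R => y - sin y.
have dg (y : R) : is_derive y 1 g (1 - cos y).
  by apply: is_deriveB.
have H := @ger0_derive1_ndecr R g 0 x.
have := H _ _ _ 0 x (lexx 0) x0 (lexx x).
rewrite /g /= sin0 subr0 subr_ge0; apply.
- by move=> y _; apply: ex_derive.
- by move=> y _; rewrite derive1E derive_val subr_ge0 cos_le1.
- have cg : forall y : R, {for y, continuous g}.
    move=> y; apply/differentiable_continuous/derivable1_diffP.
    exact: ex_derive.
  exact: continuous_subspaceT.
Qed.
End S.
Section S2.
Variable R : realType.
Lemma cos_anti (x y : R) : 0 <= x -> x <= y -> y <= pi -> cos y <= cos x.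
Proof.
move=> x0 xy ypi.
have := ltr_cos.
move=> H; case: (ltgtP x y) xy => // [lt _|-> _]; last exact: lexx.
apply: ltW; rewrite H //; rewrite in_itv /= ?x0 ?ypi ?andbT.
- by rewrite (le_trans (ltW lt)).
- by rewrite (le_trans x0 (ltW lt)).
Qed.

Lemma jordan (x : R) : 0 <= x -> x <= pi / 2 -> 2 / pi * x <= sin x.
Proof.
move=> x0 xpi.
have pi0 := pi_gt0 R.
set c := 2 / pi.
have c0 : 0 <= c by rewrite /c divr_ge0 // ltW.
have c1 : c <= 1 by rewrite /c ler_pdivrMr // mul1r pi_ge2.
have cr : -1 <= c <= 1 by rewrite c1 andbT (le_trans _ c0) // lerN10.
set z := acos c.
have zge : 0 <= z by apply: acos_ge0.
have zle : z <= pi by apply: acos_lepi.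
have cx0 : cos z = c by rewrite /z acosK // in_itv /=.
pose h : R -> R := fun y => sin y - c * y.
have dh (y : R) : is_derive y 1 h (cos y - c * 1).
  have dl : is_derive y (1:R) (fun z : R => c * z) (c * 1).
    exact: (is_deriveZ c (is_derive_id y (1:R))).
  exact: is_deriveB.
have ch : forall y : R, {for y, continuous h}.
  move=> y; apply/differentiable_continuous/derivable1_diffP.
  exact: ex_derive.
have h0 : h 0 = 0 by rewrite /h sin0 mulr0 subrr.
have hpi : h (pi / 2) = 0.
  by rewrite /h sin_pihalf /c -mulrA (mulrA pi^-1) mulVf ?gt_eqF // mul1r divff // subrr.
suff : 0 <= h x by rewrite /h subr_ge0.
case: (leP x z) => hx.
- rewrite -h0.
  apply: (@ger0_derive1_ndecr R h 0 z) => //.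
  + move=> y; rewrite in_itv /= => /andP[y0 y1].
    rewrite derive1E derive_val mulr1 subr_ge0 -cx0.
    exact: cos_anti (ltW y0) (ltW y1) zle.
  + exact: continuous_subspaceT.
- rewrite -hpi.
  apply: (@ler0_derive1_nincr R h z (pi / 2)) => //.
  + move=> y; rewrite in_itv /= => /andP[y0 y1].
    rewrite derive1E derive_val mulr1 subr_le0 -cx0.
    apply: cos_anti => //; first exact: ltW.
    apply: le_trans (ltW y1) _; rewrite ler_pdivrMr // ler_peMr // ?ltW //.
    lra.
  + exact: continuous_subspaceT.
  + exact: ltW.
Qed.
End S2.
Section S3.
Variable R : realType.
Variable m : nat.
Definition dot (f g : 'I_m -> R) : R := \sum_(i < m) f i * g i.

Lemma dotC f g : dot f g = dot g f.
Proof. by apply: eq_bigr => i _; rewrite mulrC. Qed.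

Lemma dotL a b f g h :
  dot (fun i => a * f i + b * g i) h = a * dot f h + b * dot g h.
Proof.
rewrite /dot !mulr_sumr -big_split; apply: eq_bigr => i _ /=; ring.
Qed.

Lemma dot_ge0 f : 0 <= dot f f.
Proof. by apply: sumr_ge0 => i _; rewrite -expr2 sqr_ge0. Qed.

Lemma dot_eq0 f : dot f f = 0 -> forall i, f i = 0.
Proof.
move=> H i.
have H2 : forall j, true -> 0 <= f j * f j by move=> j _; rewrite -expr2 sqr_ge0.
have /(_ i isT) := psumr_eq0P H2 H.
by move=> /eqP; rewrite mulf_eq0 orbb => /eqP.
Qed.

Lemma ortho_exists : (2 <= m)%N -> forall d : 'I_m -> R,
  exists w : 'I_m -> R, dot w d = 0 /\ dot w w = 1.
Proof.
move=> hm d.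
have h0 : (0 < m)%N by apply: leq_trans hm.
pose i0 := Ordinal h0. pose i1 := Ordinal hm.
have i10 : i1 != i0 by [].
have sumD (F : 'I_m -> R) : (forall i, i != i0 -> i != i1 -> F i = 0) ->
   \sum_(i < m) F i = F i0 + F i1.
  move=> HF; rewrite (bigD1 i0) //= (bigD1 i1) //= big1 ?addr0 //.
  by move=> i /andP[hi1 hi0]; apply: HF.
case: (eqVneq ((d i0)^+2 + (d i1)^+2) 0) => hr.
- have a0 : (d i0) = 0.
    apply/eqP; rewrite -sqrf_eq0 eq_le sqr_ge0 andbT.
    by rewrite -hr lerDl sqr_ge0.
  exists (fun i => (i == i0)%:R); split.
  + rewrite /dot sumD; first by rewrite eqxx (negbTE i10) a0 /=; ring.
    by move=> i hi _; rewrite (negbTE hi) mul0r.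
  + rewrite /dot sumD; first by rewrite eqxx (negbTE i10) /=; ring.
    by move=> i hi _; rewrite (negbTE hi) mul0r.
- have rpos : 0 < (d i0)^+2 + (d i1)^+2 by rewrite lt_def hr addr_ge0 // sqr_ge0.
  set s := Num.sqrt ((d i0)^+2 + (d i1)^+2).
  have s0 : 0 < s by rewrite sqrtr_gt0.
  have s2 : s ^+ 2 = (d i0)^+2 + (d i1)^+2 by rewrite sqr_sqrtr // ltW.
  exists (fun i => if i == i0 then - (d i1) / s else if i == i1 then (d i0) / s else 0).
  split.
  + rewrite /dot sumD; first by rewrite eqxx (negbTE i10) eqxx /=; field; rewrite gt_eqF.
    by move=> i hi hi'; rewrite (negbTE hi) (negbTE hi') mul0r.
  + rewrite /dot sumD; last by move=> i hi hi'; rewrite (negbTE hi) (negbTE hi') mul0r.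
    rewrite eqxx (negbTE i10) eqxx /=.
    have -> : - (d i1) / s * (- (d i1) / s) + (d i0) / s * ((d i0) / s) = ((d i0)^+2 + (d i1)^+2) / s^+2.
      by field; rewrite gt_eqF.
    by rewrite -s2 divff // gt_eqF // exprn_gt0.
Qed.
End S3.
Section S4.
Variable R : realType.
Variable m : nat.
Lemma cbound (d1 d2 : 'I_m -> R) : dot d1 d1 = 1 -> dot d2 d2 = 1 ->
  -1 <= dot d1 d2 <= 1.
Proof.
move=> h1 h2.
have hp := dot_ge0 (fun i => 1 * d1 i + 1 * d2 i).
have hm := dot_ge0 (fun i => 1 * d1 i + (-1) * d2 i).
rewrite !dotL !(dotC _ (fun i => _ + _)) !dotL h1 h2 (dotC d2 d1) in hp hm.
apply/andP; split; lra.
Qed.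

Lemma col_dec : (2 <= m)%N -> forall d1 d2 : 'I_m -> R,
  dot d1 d1 = 1 -> dot d2 d2 = 1 ->
  exists w, dot w d1 = 0 /\ dot w w = 1 /\
   forall i, d2 i = d1 i * cos (acos (dot d1 d2)) + w i * sin (acos (dot d1 d2)).
Proof.
move=> hm d1 d2 h1 h2.
have cb := cbound h1 h2.
set c := dot d1 d2 in cb *.
rewrite acosK ?in_itv //= sin_acos //.
set s := Num.sqrt (1 - c ^+ 2).
have s2 : s ^+ 2 = 1 - c ^+ 2.
  rewrite sqr_sqrtr //; move/andP: cb => [? ?]; nra.
have s0 : 0 <= s by apply: sqrtr_ge0.
case: (eqVneq s 0) => hs.
- have [w [hw1 hw2]] := ortho_exists hm d1.
  exists w; split => //; split => // i.
  rewrite hs mulr0 addr0.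
  pose u := fun i => 1 * d2 i + (- c) * d1 i.
  have : dot u u = 0.
    rewrite /u dotL !(dotC _ (fun i => _ + _)) !dotL h1 h2 -/c (dotC d2 d1) -/c.
    have : s ^+ 2 = 0 by rewrite hs expr0n.
    rewrite s2 => H; rewrite -H; ring.
  move=> /dot_eq0 /(_ i); rewrite /u => H.
  by rewrite mulrC; apply/eqP; rewrite -subr_eq0; apply/eqP; rewrite -H; ring.
- have sp : 0 < s by rewrite lt_def hs s0.
  exists (fun i => s^-1 * d2 i + (- c / s) * d1 i).
  have hw1 : dot (fun i => s^-1 * d2 i + (- c / s) * d1 i) d1 = 0.
    by rewrite dotL h1 (dotC d2 d1) -/c; field; rewrite gt_eqF.
  split => //; split.
  + rewrite dotL !(dotC _ (fun i => _ + _)) hw1 dotL h2 -/c.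
    have -> : s^-1 * (s^-1 * 1 + - c / s * c) + - c / s * 0 = (1 - c^+2) / s^+2.
      by field; rewrite gt_eqF.
    by rewrite -s2 divff // gt_eqF // exprn_gt0.
  + by move=> i; field.
Qed.
End S4.
Section S5.
Variable R : realType.
Variables m p : nat.

Definition col (A : 'M[R]_(m, p)) (j : 'I_p) : 'I_m -> R := fun i => A i j.

Lemma inD_dot (D : 'M[R]_(m, p)) : inD D -> forall j, dot (col D j) (col D j) = 1.
Proof.
move=> hD j; have := hD j; rewrite /colnorm => H.
have H2 : \sum_(i < m) D i j ^+ 2 = 1.
  by rewrite -[LHS]sqr_sqrtr ?H ?expr1n //; apply: sumr_ge0 => i _; apply: sqr_ge0.
by rewrite -H2; apply: eq_bigr => i _; rewrite expr2.
Qed.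

Lemma build (D E : 'M[R]_(m, p)) (wf : 'I_p -> 'I_m -> R) (th : 'I_p -> R)
  (v : 'cV[R]_p) (tau : R) :
  (forall j, dot (wf j) (col D j) = 0 /\ dot (wf j) (wf j) = 1 /\
     forall i, E i j = D i j * cos (th j) + wf j i * sin (th j)) ->
  (forall j, v j 0 * tau = th j) ->
  inW D (\matrix_(i, j) wf j i) /\ E = Dcurve D (\matrix_(i, j) wf j i) v tau.
Proof.
move=> hw hv; split.
- move=> j; have [h1 [h2 _]] := hw j; split.
  + rewrite -h1 mxE; apply: eq_bigr => i _; rewrite !mxE //.
  + rewrite -h2 mxE; apply: eq_bigr => i _; rewrite !mxE //.
- apply/matrixP => i j; have [_ [_ h3]] := hw j.
  by rewrite /Dcurve !mul_mx_diag !mxE hv h3.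
Qed.
End S5.
Theorem lemma1 (R : realType) (m p : nat) (hm : (2 <= m)%N) (hp : (0 < p)%N)
  (D1 D2 : 'M[R]_(m, p)) (hD1 : inD D1) (hD2 : inD D2) :
  exists (W : 'M[R]_(m, p)) (v : 'cV[R]_p) (tau : R),
    [/\ inW D1 W, inSplus v, 0 <= tau, tau * infnorm v <= pi
      & D2 = Dcurve D1 W v tau] /\
    [/\
      (forall j : 'I_p,
         2 / pi * (tau * v j 0) <= colnorm (D2 - D1) j /\
         colnorm (D2 - D1) j = 2 * sin (tau * v j 0 / 2) /\
         2 * sin (tau * v j 0 / 2) <= tau * v j 0),
      2 / pi * tau <= frob (D2 - D1) <= tau
    & exists W' : 'M[R]_(m, p), inW D2 W' /\ D1 = Dcurve D2 W' v tau].
Proof.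
have d1 := inD_dot hD1. have d2 := inD_dot hD2.
pose c j := dot (col D1 j) (col D2 j).
have cb j : -1 <= c j <= 1 := cbound (d1 j) (d2 j).
pose th j := acos (c j).
have th0 j : 0 <= th j := acos_ge0 (cb j).
have thpi j : th j <= pi := acos_lepi (cb j).
have [wf hwf] := choice (fun j => col_dec hm (d1 j) (d2 j)).
have [wf' hwf'] := choice (fun j => col_dec hm (d2 j) (d1 j)).
pose tau := Num.sqrt (\sum_j th j ^+ 2).
pose i0 : 'I_p := Ordinal hp.
pose v : 'cV[R]_p := \col_j (if tau == 0 then (j == i0)%:R else th j / tau).
have hsum0 : 0 <= \sum_j th j ^+ 2 by apply: sumr_ge0 => j _; apply: sqr_ge0.
have tau0 : 0 <= tau by apply: sqrtr_ge0.
have tau2 : tau ^+ 2 = \sum_j th j ^+ 2 by rewrite sqr_sqrtr.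
have hv j : v j 0 * tau = th j.
  rewrite mxE; case: eqP => [t0|/eqP tn]; last by rewrite divfK.
  rewrite t0 mulr0.
  have s0 : \sum_j th j ^+ 2 = 0 by rewrite -tau2 t0 expr0n.
  have H2 : forall k, true -> 0 <= th k ^+ 2 by move=> k _; apply: sqr_ge0.
  have /(_ j isT) := psumr_eq0P H2 s0.
  by move=> /eqP; rewrite sqrf_eq0 => /eqP ->.
have hv' j : tau * v j 0 = th j by rewrite mulrC hv.
have hvpos j : 0 <= v j 0.
  by rewrite mxE; case: ifP => _; [apply: ler0n | apply: divr_ge0].
have hcj j : c j = cos (th j) by rewrite /th acosK // in_itv /=.
have hcol j : colnorm (D2 - D1) j = 2 * sin (th j / 2).
  pose u := fun i => 1 * col D2 j i + (-1) * col D1 j i.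
  have -> : colnorm (D2 - D1) j = Num.sqrt (dot u u).
    rewrite /colnorm; apply: congr1; apply: eq_bigr => i _.
    by rewrite !mxE /u /col; ring.
  rewrite /u dotL !(dotC _ (fun i => _ + _)) !dotL d1 d2 (dotC (col D2 j)) -/(c j).
  have e := cos_mulr2n (th j / 2).
  rewrite (_ : (th j / 2) *+ 2 = th j) in e; last by rewrite mulr2n; lra.
  rewrite cos2sin2 in e.
  have -> : 1 * (1 * 1 + -1 * c j) + -1 * (1 * c j + -1 * 1) =
     (2 * sin (th j / 2)) ^+ 2.
    by rewrite hcj e; ring.
  rewrite sqrtr_sqr ger0_norm // mulr_ge0 // sin_ge0_pi //.
  apply/andP; split; have := th0 j; have := thpi j; have := pi_gt0 R; lra.
have hj1 j : 2 / pi * th j <= 2 * sin (th j / 2).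
  have J := @jordan R (th j / 2).
  have := th0 j; have := thpi j => ? ?.
  have : 2 / pi * (th j / 2) <= sin (th j / 2) by apply: J; lra.
  lra.
have hj2 j : 2 * sin (th j / 2) <= th j.
  have := @sin_le_id R (th j / 2).
  have := th0 j => ? H; have := H ltac:(lra); lra.
have k0 : 0 <= 2 / pi :> R by rewrite divr_ge0 // ltW // pi_gt0.
have hfrob : frob (D2 - D1) = Num.sqrt (\sum_j (2 * sin (th j / 2)) ^+ 2).
  rewrite /frob exchange_big; apply: congr1; apply: eq_bigr => j _.
  rewrite -hcol /colnorm sqr_sqrtr //.
  by apply: sumr_ge0 => i _; apply: sqr_ge0.
have [inW1 E1] := @build R m p D1 D2 wf th v tau hwf hv.
have [inW2 E2] : inW D2 (\matrix_(i, j) wf' j i) /\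
    D1 = Dcurve D2 (\matrix_(i, j) wf' j i) v tau.
  apply: build hv => j; rewrite /th /c (dotC (col D1 j)); exact: hwf' j.
exists (\matrix_(i, j) wf j i), v, tau; split.
  split => //.
  - split => //.
    rewrite /vnorm; case: (eqVneq tau 0) => t0.
    + rewrite (bigD1 i0) //= big1 ?addr0.
        by rewrite mxE t0 eqxx eqxx expr1n sqrtr1.
      by move=> i hi; rewrite mxE t0 eqxx (negbTE hi) expr0n.
    + have -> : \sum_(i < p) v i 0 ^+ 2 = 1.
        rewrite (eq_bigr (fun i => th i ^+ 2 / tau ^+ 2)).
          by rewrite -mulr_suml -tau2 divff // expf_neq0.
        by move=> i _; rewrite mxE (negbTE t0) expr_div_n.
      exact: sqrtr1.
  - rewrite /infnorm; apply: (big_ind (fun x => tau * x <= pi)).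
    + by rewrite mulr0 pi_ge0.
    + by move=> x y hx hy; rewrite maxEle; case: ifP.
    + by move=> i _; rewrite ger0_norm ?hv'.
split.
- move=> j; rewrite hv' hcol; split => //; split => //.
- rewrite hfrob; apply/andP; split.
  + have hs : \sum_j (2 / pi * th j) ^+ 2 = (2 / pi * tau) ^+ 2.
      rewrite exprMn tau2 mulr_sumr; apply: eq_bigr => j _; by rewrite exprMn.
    have -> : 2 / pi * tau = Num.sqrt (\sum_j (2 / pi * th j) ^+ 2).
      by rewrite hs sqrtr_sqr ger0_norm // (mulr_ge0 k0 tau0).
    apply: ler_wsqrtr; apply: ler_sum => j _.
    have := hj1 j; have := th0 j; have : 0 <= 2 / pi * th j by apply: mulr_ge0.
    move=> ? ? ?; nra.
  + rewrite /tau; apply: ler_wsqrtr; apply: ler_sum => j _.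
    have := hj1 j; have := hj2 j; have : 0 <= 2 / pi * th j by apply: mulr_ge0.
    move=> ? ? ?; nra.
- by exists (\matrix_(i, j) wf' j i).
Qed.
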